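(* Let $F:[n]^\ell\to\mathbb{R}$, let $i\in\{0,\dots,\ell\}$, and let $\varepsilon>0$ be real. Then $$\mathbb{E}_X[F_i(X)^4]\ge 4\varepsilon^3\eta_i-3\varepsilon^4\delta(F)+B(F),$$ where $B(F)=4\varepsilon^3\,\mathbb{E}_X[(F^3-F)F_i]+3\varepsilon^4\,\mathbb{E}_X[F-F^4]$, and this inequality is a sum-of-squares inequality in the indeterminates $\{F(X)\}$.
   Context: $[n]=\mathbb{Z}/n\mathbb{Z}$, $\chi_T(x)=\prod_j e^{2\pi iT_jx_j/n}$ for $T\in[n]^\ell$, $\hat F(T)=\mathbb{E}_Y[F(Y)\overline{\chi_T(Y)}]$, $|T|=|\{j:T_j\ne0\}|$. $F_i=\sum_{|T|=i}\hat F(T)\chi_T$, $\eta_i=\mathbb{E}_X[F_i(X)^2]$, $\delta(F)=\mathbb{E}_X[F(X)]$; powers of $F$ are pointwise and expectations are over uniform $X\in[n]^\ell$. *)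

(* Defs.v *)
From HB Require Import structures.
From mathcomp Require Import all_boot all_order all_algebra.
From mathcomp Require Import reals trigo.
From mathcomp Require Import complex.
Set Implicit Arguments. Unset Strict Implicit. Unset Printing Implicit Defensive.
Import Order.TTheory GRing.Theory Num.Theory.
Local Open Scope ring_scope.
Local Open Scope complex_scope.

Section Fourier.
Variables (R : realType) (n l : nat).

(* points of [n]^l, [n] = Z/nZ represented by 'I_n (arithmetic done mod n
   inside the character, which only depends on residues mod n) *)
Definition pt := {ffun 'I_l -> 'I_n}.

Definition expi (theta : R) : R[i] := (cos theta) +i* (sin theta).

Definition chi (T x : pt) : R[i] :=
  \prod_(j < l) expi (2 * pi * ((T j : nat) * (x j : nat))%:R / n%:R).

Definition Ex (K : fieldType) (f : pt -> K) : K :=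
  (\sum_(X : pt) f X) / #|{: pt}|%:R.

Definition Fhat (F : pt -> R) (T : pt) : R[i] :=
  Ex (fun Y => (F Y)%:C * (chi T Y)^*).

Definition wt (T : pt) : nat := #|[set j | T j != 0 :> nat]|.

Definition Fpart (F : pt -> R) (i : nat) (x : pt) : R[i] :=
  \sum_(T : pt | wt T == i) Fhat F T * chi T x.

Definition etaF (F : pt -> R) (i : nat) : R[i] := Ex (fun X => Fpart F i X ^+ 2).

Definition deltaF (F : pt -> R) : R := Ex F.

Definition Bterm (eps : R) (F : pt -> R) (i : nat) : R[i] :=
  4 * (eps ^+ 3)%:C * Ex (fun X => ((F X ^+ 3 - F X)%:C) * Fpart F i X)
  + 3 * (eps ^+ 4)%:C * (Ex (fun X => F X - F X ^+ 4))%:C.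

End Fourier.

(* Real polynomials in the finitely many indeterminates indexed by a finType V:
   a polynomial is a finite list of (coefficient, exponent vector) monomials. *)
Definition rpoly (R : realType) (V : finType) := seq (R * {ffun V -> nat}).

Definition rpoly_eval (R : realType) (V : finType) (p : rpoly R V) (v : V -> R) : R :=
  \sum_(m <- p) m.1 * \prod_(x : V) v x ^+ m.2 x.

(* Main.v *)
Require Import Defs.
From HB Require Import structures.
From mathcomp Require Import all_boot all_order all_algebra.
From mathcomp Require Import reals trigo.
From mathcomp Require Import complex.
From mathcomp Require Import ring lra.
Set Implicit Arguments. Unset Strict Implicit. Unset Printing Implicit Defensive.
Import Order.TTheory GRing.Theory Num.Theory.
Local Open Scope ring_scope.
Local Open Scope complex_scope.

Section Om.
Variables (R : realType) (m : nat).
Local Notation n := m.+1.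

Lemma expiD (a b : R) : expi (a + b) = expi a * expi b.
Proof. by rewrite /expi cosD sinD; simpc; congr (_ +i* _); ring. Qed.

Lemma expi0 : expi (0 : R) = 1.
Proof. by rewrite /expi cos0 sin0. Qed.

Definition om (k : nat) : R[i] := expi (2 * pi * k%:R / n%:R).

Lemma omD a b : om (a + b) = om a * om b.
Proof. by rewrite /om -expiD natrD !mulrDr mulrDl. Qed.

Lemma om0 : om 0 = 1.
Proof. by rewrite /om mulr0 mul0r expi0. Qed.

Lemma omn : om n = 1.
Proof.
rewrite /om mulfK ?pnatr_eq0 // /expi mulr_natl cos2pi sin2pi //.
Qed.

Lemma omX s x : om (s * x) = om s ^+ x.
Proof. elim: x => [|x IH]; first by rewrite muln0 om0 expr0.
by rewrite mulnS omD IH exprS. Qed.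

Lemma om_mod k : om k = om (k %% n).
Proof. rewrite {1}(divn_eq k n) omD mulnC omX omn expr1n mul1r //. Qed.

Lemma om_conj k : om k * (om k)^* = 1.
Proof. rewrite /om /expi /=; simpc. by rewrite -!expr2 cos2Dsin2 mulrC addNr. Qed.

Lemma om_neq1 s : (0 < s < n)%N -> om s != 1.
Proof.
move=> /andP[s0 sn]; apply/negP => /eqP H.
set t : R := (pi : R) * s%:R / n%:R.
have e2 : 2 * pi * s%:R / n%:R = t *+ 2 by rewrite /t -mulr_natl; ring.
have : cos (t *+ 2) = 1.
  by move: H; rewrite /om /expi e2 => -[].
rewrite cos_mulr2n => /eqP; rewrite subr_eq -mulr_natr.
have st : 0 < sin t.
  apply: sin_gt0_pi; rewrite /t; apply/andP; split.
    by rewrite !mulr_gt0 ?pi_gt0 ?invr_gt0 ?ltr0n.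
  rewrite -mulrA gtr_pMr ?pi_gt0 // ltr_pdivrMr ?ltr0n // mul1r ltr_nat //.
move=> h.
have : cos t ^+ 2 = 1.
  by move/eqP: h => h; lra.
rewrite cos2sin2 => /eqP; rewrite subr_eq addrC -subr_eq subrr eq_sym expf_eq0 /=.
by rewrite gt_eqF.
Qed.
End Om.

Lemma conjE (R : realType) (x : R[i]) : Num.conj x = conjc x.
Proof. by []. Qed.

Section Chi.
Variables (R : realType) (m l : nat).
Local Notation n := m.+1.
Local Notation P := (pt n l).
Local Notation chi := (@chi R n l).

Definition tadd (T U : P) : P := [ffun j => T j + U j].
Definition tneg (T : P) : P := [ffun j => - T j].
Definition tzero : P := [ffun => 0].

Lemma chiE (T X : P) : chi T X = \prod_(j < l) om R m (T j * X j).
Proof. by []. Qed.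

Lemma valZpD (x y : 'I_n) : val (x + y) = ((x + y) %% n)%N.
Proof. by []. Qed.

Lemma chiD (T U X : P) : chi (tadd T U) X = chi T X * chi U X.
Proof.
rewrite !chiE -big_split; apply: eq_bigr => j _ /=.
rewrite ffunE valZpD om_mod modnMml -om_mod mulnDl omD //.
Qed.

Lemma chi0 (X : P) : chi tzero X = 1.
Proof. rewrite chiE big1 // => j _; by rewrite ffunE mul0n om0. Qed.

Lemma taddN (T : P) : tadd T (tneg T) = tzero.
Proof. by apply/ffunP => j; rewrite !ffunE subrr. Qed.

Lemma chi_conj (T X : P) : chi T X * (chi T X)^* = 1.
Proof.
rewrite chiE rmorph_prod -big_split big1 // => j _; exact: om_conj.
Qed.

Lemma chiN (T X : P) : (chi T X)^* = chi (tneg T) X.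
Proof.
have h := chiD T (tneg T) X; rewrite taddN chi0 in h.
by rewrite -[LHS]mulr1 h mulrA [_^* * _]mulrC chi_conj mul1r.
Qed.

Lemma tnegK : involutive tneg.
Proof. by move=> T; apply/ffunP => j; rewrite !ffunE opprK. Qed.

Lemma wt_neg (T : P) : wt (tneg T) = wt T.
Proof.
rewrite /wt; apply: eq_card => j; rewrite !inE ffunE.
have -> : ((- T j : 'I_n) != 0 :> nat) = (- T j != 0) by [].
have -> : ((T j : 'I_n) != 0 :> nat) = (T j != 0) by [].
by rewrite oppr_eq0.
Qed.

Lemma sum_chi (S : P) :
  \sum_(X : P) chi S X = if S == tzero then #|{: P}|%:R else 0.
Proof.
under eq_bigr do rewrite chiE.
rewrite -(bigA_distr_bigA (fun (j : 'I_l) (x : 'I_n) => om R m (S j * x))) /=.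
case: eqP => [->|/eqP nz].
  rewrite card_ffun !card_ord natrX.
  rewrite (eq_bigr (fun _ => n%:R)) ?prodr_const ?card_ord // => j _.
  under eq_bigr do rewrite /tzero ffunE mul0n om0.
  by rewrite sumr_const card_ord.
have [j Sj] : exists j, S j != 0.
  apply/existsP; apply: contraR nz => /existsPn h.
  by apply/eqP/ffunP => j; rewrite ffunE; apply/eqP; move: (h j); rewrite negbK.
rewrite (bigD1 j) //= [X in X * _](_ : _ = 0) ?mul0r //.
under eq_bigr do rewrite omX.
have w1 : om R m (S j) != 1.
  apply: om_neq1; rewrite ltn_ord andbT lt0n.
  by move: Sj; apply: contra => /eqP h; apply/eqP/val_inj.
have wn : om R m (S j) ^+ n = 1 by rewrite -omX om_mod modnMl om0.
have := subrX1 (om R m (S j)) n; rewrite wn subrr => /esym/eqP.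
by rewrite mulf_eq0 subr_eq0 (negbTE w1) /= => /eqP.
Qed.

Lemma orth (T U : P) :
  \sum_(X : P) chi T X * (chi U X)^* = if T == U then #|{: P}|%:R else 0.
Proof.
under eq_bigr do rewrite conjE chiN -chiD.
rewrite sum_chi; congr (if _ then _ else _).
apply/eqP/eqP => [h|->]; last exact: taddN.
apply/ffunP => j; move/ffunP: h => /(_ j); rewrite !ffunE => /eqP.
by rewrite subr_eq0 => /eqP.
Qed.

End Chi.

Section Four.
Variables (R : realType) (m l : nat) (F : pt m.+1 l -> R) (i : nat).
Local Notation n := m.+1.
Local Notation P := (pt n l).
Local Notation chi := (@chi R n l).
Local Notation N := (#|{: P}|%:R : R[i]).

Lemma N_neq0 : N != 0.
Proof. by rewrite pnatr_eq0 -lt0n card_ffun card_ord expn_gt0. Qed.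

Lemma conj_real (r : R) : Num.conj (r%:C) = r%:C.
Proof. by rewrite conjE conjc_real. Qed.

Lemma conjK (z : R[i]) : Num.conj (Num.conj z) = z.
Proof. by rewrite !conjE conjcK. Qed.

Lemma conjM (a b : R[i]) : Num.conj (a * b) = Num.conj a * Num.conj b.
Proof. exact: rmorphM. Qed.

Lemma conj_sum (I : Type) (r : seq I) (Q : pred I) (f : I -> R[i]) :
  Num.conj (\sum_(j <- r | Q j) f j) = \sum_(j <- r | Q j) Num.conj (f j).
Proof. exact: rmorph_sum. Qed.

Lemma Fhat_conj T : Num.conj (Fhat F T) = Fhat F (tneg T).
Proof.
rewrite /Fhat /Ex conjM fmorphV rmorph_nat conj_sum; congr (_ / _).
apply: eq_bigr => Y _; rewrite conjM conj_real conjK.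
by rewrite conjE chiN tnegK.
Qed.

Lemma Fpart_real X : Num.conj (Fpart F i X) = Fpart F i X.
Proof.
rewrite /Fpart conj_sum; under eq_bigr do rewrite conjM Fhat_conj conjE chiN.
rewrite [RHS](reindex_inj (inv_inj (@tnegK m l))); apply: eq_bigl => T.
by rewrite wt_neg.
Qed.

Definition cf T := if wt T == i then Fhat F T else 0.

Lemma FpartE X : Fpart F i X = \sum_T cf T * chi T X.
Proof. by rewrite /Fpart big_mkcond; apply: eq_bigr => T _; rewrite /cf; case: ifP; rewrite ?mul0r. Qed.

Lemma Fhat_sum T : \sum_(Y : P) (F Y)%:C * Num.conj (chi T Y) = Fhat F T * N.
Proof. by rewrite /Fhat /Ex divfK ?N_neq0. Qed.

Lemma parseval :
  \sum_(X : P) Fpart F i X * Num.conj (Fpart F i X)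
  = \sum_(X : P) (F X)%:C * Num.conj (Fpart F i X).
Proof.
have E1 : forall X, Fpart F i X * Num.conj (Fpart F i X) =
   \sum_T \sum_U cf T * Num.conj (cf U) * (chi T X * Num.conj (chi U X)).
  move=> X; rewrite FpartE conj_sum mulr_suml; apply: eq_bigr => T _.
  rewrite mulr_sumr; apply: eq_bigr => U _; rewrite conjM; ring.
under eq_bigr do rewrite E1.
rewrite exchange_big /=; under eq_bigr do rewrite exchange_big /=.
under eq_bigr do under eq_bigr do rewrite -mulr_sumr orth.
have E2 : forall X, (F X)%:C * Num.conj (Fpart F i X) =
   \sum_U Num.conj (cf U) * ((F X)%:C * Num.conj (chi U X)).
  move=> X; rewrite FpartE conj_sum mulr_sumr; apply: eq_bigr => U _.
  rewrite conjM; ring.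
under [RHS]eq_bigr do rewrite E2.
rewrite [RHS]exchange_big /=.
under [RHS]eq_bigr do rewrite -mulr_sumr Fhat_sum.
apply: eq_bigr => T _.
rewrite (bigD1 T) //= eqxx big1 ?addr0; last first.
  by move=> U /negbTE; rewrite eq_sym => ->; rewrite mulr0.
rewrite /cf; case: ifP => _; last by rewrite !mul0r rmorph0 mul0r.
ring.
Qed.

Definition kc X Y := (\sum_(T | wt T == i) Num.conj (chi T Y) * chi T X) / N.

Lemma Fpart_kernel X : Fpart F i X = \sum_Y (F Y)%:C * kc X Y.
Proof.
rewrite /Fpart /kc.
under eq_bigr do rewrite /Fhat /Ex mulr_suml mulr_suml.
under [RHS]eq_bigr do rewrite mulr_suml mulr_sumr.
rewrite [RHS]exchange_big /=; apply: eq_bigr => T _; apply: eq_bigr => Y _; ring.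
Qed.

Definition kr X Y := complex.Re (kc X Y).
Definition ra X := \sum_Y F Y * kr X Y.

Lemma ReD (a b : R[i]) : complex.Re (a + b) = complex.Re a + complex.Re b.
Proof. by case: a; case: b. Qed.

Lemma ReM (r : R) (z : R[i]) : complex.Re (r%:C * z) = r * complex.Re z.
Proof. case: z => a b /=; ring. Qed.

Lemma Fpart_ra X : Fpart F i X = (ra X)%:C.
Proof.
have h := Fpart_real X.
have -> : ra X = complex.Re (Fpart F i X).
  rewrite Fpart_kernel /ra (big_morph (@complex.Re R) ReD (erefl _)).
  by apply: eq_bigr => Y _; rewrite ReM.
move: h; case: (Fpart F i X) => a b; rewrite conjE /= => -[] hb.
have -> : b = 0 by lra.
by [].
Qed.

End Four.

Section RPoly.
Variables (R : realType) (V : finType).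
Local Notation rp := (rpoly R V).

Definition radd (p q : rp) : rp := p ++ q.
Definition rscale (c : R) (p : rp) : rp := [seq (c * x.1, x.2) | x <- p].
Definition rmul (p q : rp) : rp :=
  map (fun x : (R * {ffun V -> nat}) * (R * {ffun V -> nat}) =>
         (x.1.1 * x.2.1, [ffun v : V => (x.1.2 v + x.2.2 v)%N]))
      [seq (a, b) | a <- p, b <- q].
Definition rvar (c : R) (Y : V) : rp := [:: (c, [ffun Z => nat_of_bool (Z == Y)])].

Lemma radd_eval p q v : rpoly_eval (radd p q) v = rpoly_eval p v + rpoly_eval q v.
Proof. by rewrite /rpoly_eval big_cat. Qed.

Lemma rscale_eval c p v : rpoly_eval (rscale c p) v = c * rpoly_eval p v.
Proof.
rewrite /rpoly_eval big_map mulr_sumr; apply: eq_bigr => x _ /=; by rewrite mulrA.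
Qed.

Lemma rmul_eval p q v : rpoly_eval (rmul p q) v = rpoly_eval p v * rpoly_eval q v.
Proof.
rewrite /rpoly_eval big_map big_allpairs mulr_suml; apply: eq_bigr => a _.
rewrite mulr_sumr; apply: eq_bigr => b _ /=.
under eq_bigr do rewrite ffunE exprD.
rewrite big_split /=; ring.
Qed.

Lemma rvar_eval c Y v : rpoly_eval (rvar c Y) v = c * v Y.
Proof.
rewrite /rpoly_eval big_cons big_nil addr0 /=; congr (_ * _).
rewrite (bigD1 Y) //= ffunE eqxx expr1 big1 ?mulr1 // => Z /negbTE ZY.
by rewrite ffunE ZY expr0.
Qed.

Lemma rsum_eval (I : Type) (r : seq I) (c : I -> R) (e : I -> V) v :
  rpoly_eval [seq (c Y, [ffun Z => nat_of_bool (Z == e Y)]) | Y <- r] v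
  = \sum_(Y <- r) c Y * v (e Y).
Proof.
rewrite /rpoly_eval big_map; apply: eq_bigr => Y _ /=; congr (_ * _).
rewrite (bigD1 (e Y)) //= ffunE eqxx expr1 big1 ?mulr1 // => Z /negbTE ZY.
by rewrite ffunE ZY expr0.
Qed.

End RPoly.

Lemma eq_Ex (n l : nat) (K : fieldType) (f g : pt n l -> K) : f =1 g -> Ex f = Ex g.
Proof. by move=> h; rewrite /Ex (eq_bigr _ (fun X _ => h X)). Qed.

Lemma ExC (R : realType) (n l : nat) (g : pt n l -> R) :
  Ex (fun X => (g X)%:C) = (Ex g)%:C.
Proof. by rewrite /Ex rmorphM fmorphV rmorph_nat rmorph_sum. Qed.


Lemma cplx_lin (R : realType) (a b c d e f g : R) :
  a%:C - (4 * b%:C * c%:C - 3 * d%:C * e%:C + (4 * b%:C * f%:C + 3 * d%:C * g%:C))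
  = (a - (4 * b * c - 3 * d * e + (4 * b * f + 3 * d * g)))%:C.
Proof. have h4 : (4 : R[i]) = (4 : R)%:C by rewrite rmorph_nat.
have h3 : (3 : R[i]) = (3 : R)%:C by rewrite rmorph_nat.
by rewrite h4 h3 /=; simpc. Qed.

Theorem lemmaC13 (R : realType) (n l : nat) (i : nat) (eps : R) :
  (0 < n)%N -> (i <= l)%N -> 0 < eps ->
  (forall F : pt n l -> R,
     4 * (eps ^+ 3)%:C * etaF F i - 3 * (eps ^+ 4)%:C * (deltaF F)%:C + Bterm eps F i
       <= Ex (fun X => Fpart F i X ^+ 4))
  /\
  (exists qs : seq (rpoly R (pt n l)),
     forall F : pt n l -> R,
       Ex (fun X => Fpart F i X ^+ 4)
         - (4 * (eps ^+ 3)%:C * etaF F i - 3 * (eps ^+ 4)%:C * (deltaF F)%:C + Bterm eps F i)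
       = (\sum_(q <- qs) rpoly_eval q F ^+ 2)%:C).
Proof.
case: n => [//|m] _ _ eps0.
set Nr : R := #|{: pt m.+1 l}|%:R.
have Nr0 : 0 < Nr by rewrite /Nr ltr0n card_ffun card_ord expn_gt0.
set c : R := (Num.sqrt Nr)^-1.
have c2 : c ^+ 2 = Nr^-1 by rewrite /c exprVn sqr_sqrtr // ltW.
set s2 : R := Num.sqrt 2.
have s22 : s2 ^+ 2 = 2 by rewrite /s2 sqr_sqrtr // ler0n.
pose pa (X : pt m.+1 l) : rpoly R (pt m.+1 l) :=
  [seq (kr R i X Y, [ffun Z => nat_of_bool (Z == id Y)]) | Y <- index_enum (pt m.+1 l)].
pose pb (X : pt m.+1 l) := rvar eps X.
pose q1 X := rscale c (rmul (radd (pa X) (rscale (-1) (pb X))) (radd (pa X) (pb X))).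
pose q2 X := rscale (c * s2) (rmul (radd (pa X) (rscale (-1) (pb X))) (pb X)).
have sos : forall F : pt m.+1 l -> R,
       Ex (fun X => Fpart F i X ^+ 4)
         - (4 * (eps ^+ 3)%:C * etaF F i - 3 * (eps ^+ 4)%:C * (deltaF F)%:C + Bterm eps F i)
       = (\sum_(q <- map q1 (index_enum _) ++ map q2 (index_enum _)) rpoly_eval q F ^+ 2)%:C.
  move=> F.
  have paE X : rpoly_eval (pa X) F = ra F i X.
    rewrite /pa rsum_eval /ra; apply: eq_bigr => Y _; exact: mulrC.
  have pbE X : rpoly_eval (pb X) F = eps * F X by rewrite rvar_eval.
  rewrite big_cat !big_map /=.
  have qE X : rpoly_eval (q1 X) F ^+ 2 + rpoly_eval (q2 X) F ^+ 2 =
     Nr^-1 * (ra F i X ^+ 4 - 4 * eps ^+ 3 * (F X ^+ 3 * ra F i X) + 3 * eps ^+ 4 * F X ^+ 4).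
    rewrite !rscale_eval !rmul_eval !radd_eval !rscale_eval paE pbE.
    rewrite !exprMn c2 s22; ring.
  rewrite -big_split /= (eq_bigr _ (fun X _ => qE X)) -mulr_sumr.
  have pars : \sum_X ra F i X ^+ 2 = \sum_X F X * ra F i X.
    have := parseval F i.
    under eq_bigr do rewrite Fpart_ra conj_real -rmorphM.
    under [in X in _ = X -> _]eq_bigr do rewrite Fpart_ra conj_real -rmorphM.
    rewrite -!rmorph_sum => /complexI ->; apply: eq_bigr => X _; by [].
  rewrite /etaF /Bterm /deltaF.
  rewrite (@eq_Ex _ _ _ (fun X => Fpart F i X ^+ 4) (fun X => (ra F i X ^+ 4)%:C)); last by move=> X; rewrite Fpart_ra rmorphXn.
  rewrite (@eq_Ex _ _ _ (fun X => Fpart F i X ^+ 2) (fun X => (ra F i X ^+ 2)%:C)); last by move=> X; rewrite Fpart_ra rmorphXn.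
  rewrite (@eq_Ex _ _ _ (fun X => (F X ^+ 3 - F X)%:C * Fpart F i X) (fun X => ((F X ^+ 3 - F X) * ra F i X)%:C)); last by move=> X; rewrite Fpart_ra rmorphM.
  rewrite !ExC cplx_lin; congr (_%:C).
  rewrite /Ex -/Nr.
  have E1 : \sum_X (F X ^+ 3 - F X) * ra F i X = \sum_X F X ^+ 3 * ra F i X - \sum_X F X * ra F i X.
    by rewrite -sumrB; apply: eq_bigr => X _; ring.
  have E2 : \sum_X (F X - F X ^+ 4) = \sum_X F X - \sum_X F X ^+ 4 by rewrite sumrB.
  have E3 : \sum_X (ra F i X ^+ 4 - 4 * eps ^+ 3 * (F X ^+ 3 * ra F i X) + 3 * eps ^+ 4 * F X ^+ 4)
     = \sum_X ra F i X ^+ 4 - 4 * eps ^+ 3 * \sum_X F X ^+ 3 * ra F i X + 3 * eps ^+ 4 * \sum_X F X ^+ 4.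
    by rewrite big_split sumrB /= -!mulr_sumr.
  rewrite E1 E2 E3 pars.
  field; by rewrite gt_eqF.
split; last by exists (map q1 (index_enum _) ++ map q2 (index_enum _)).
move=> F; rewrite -subr_ge0 sos ler0c.
by apply: sumr_ge0 => q _; apply: sqr_ge0.
Qed.
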